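(* There exist a Banach algebra $A$ which is not nil and a Banach $A$-bimodule $X$ such that $JMul_{2}(A,X)\subsetneq JMul_{3}(A,X)$.
   Context: A Banach algebra $A$ is nil if there is $n\in\mathbb{N}$ with $a^n=0$ for all $a\in A$. A bounded linear map $J:A\to X$ is an $n$-Jordan multiplier if $J(a^n)=a\cdot J(a^{n-1})=J(a^{n-1})\cdot a$ for all $a\in A$; $JMul_n(A,X)$ is the set of these. *)

(* Defs.v *)
From Stdlib Require Import Reals.
Open Scope R_scope.

Record C := mkC { Re : R; Im : R }.
Definition C0 : C := mkC 0 0.
Definition C1 : C := mkC 1 0.
Definition Cadd (z w : C) : C := mkC (Re z + Re w) (Im z + Im w).
Definition Cmul (z w : C) : C :=
  mkC (Re z * Re w - Im z * Im w) (Re z * Im w + Im z * Re w).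
Definition Cmod (z : C) : R := sqrt (Re z * Re z + Im z * Im z).

Record BanachSpace := {
  bs_car :> Type;
  bs_add : bs_car -> bs_car -> bs_car;
  bs_zero : bs_car;
  bs_opp : bs_car -> bs_car;
  bs_scal : C -> bs_car -> bs_car;
  bs_norm : bs_car -> R;
  bs_addA : forall x y z, bs_add x (bs_add y z) = bs_add (bs_add x y) z;
  bs_addC : forall x y, bs_add x y = bs_add y x;
  bs_add0 : forall x, bs_add x bs_zero = x;
  bs_addN : forall x, bs_add x (bs_opp x) = bs_zero;
  bs_scal1 : forall x, bs_scal C1 x = x;
  bs_scalA : forall l m x, bs_scal l (bs_scal m x) = bs_scal (Cmul l m) x;
  bs_scalDr : forall l x y, bs_scal l (bs_add x y) = bs_add (bs_scal l x) (bs_scal l y);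
  bs_scalDl : forall l m x, bs_scal (Cadd l m) x = bs_add (bs_scal l x) (bs_scal m x);
  bs_norm_ge0 : forall x, 0 <= bs_norm x;
  bs_norm_eq0 : forall x, bs_norm x = 0 -> x = bs_zero;
  bs_normZ : forall l x, bs_norm (bs_scal l x) = Cmod l * bs_norm x;
  bs_normD : forall x y, bs_norm (bs_add x y) <= bs_norm x + bs_norm y;
  bs_complete : forall u : nat -> bs_car,
    (forall eps, 0 < eps -> exists N, forall m n, (N <= m)%nat -> (N <= n)%nat ->
        bs_norm (bs_add (u m) (bs_opp (u n))) < eps) ->
    exists l, forall eps, 0 < eps -> exists N, forall n, (N <= n)%nat ->
        bs_norm (bs_add (u n) (bs_opp l)) < eps
}.

Arguments bs_add {_}. Arguments bs_zero {_}. Arguments bs_opp {_}.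
Arguments bs_scal {_}. Arguments bs_norm {_}.

Record BanachAlgebra := {
  ba_sp :> BanachSpace;
  ba_mul : ba_sp -> ba_sp -> ba_sp;
  ba_mulA : forall a b c, ba_mul a (ba_mul b c) = ba_mul (ba_mul a b) c;
  ba_mulDl : forall a b c, ba_mul (bs_add a b) c = bs_add (ba_mul a c) (ba_mul b c);
  ba_mulDr : forall a b c, ba_mul a (bs_add b c) = bs_add (ba_mul a b) (ba_mul a c);
  ba_mulZl : forall l a b, ba_mul (bs_scal l a) b = bs_scal l (ba_mul a b);
  ba_mulZr : forall l a b, ba_mul a (bs_scal l b) = bs_scal l (ba_mul a b);
  ba_normM : forall a b, bs_norm (ba_mul a b) <= bs_norm a * bs_norm b
}.

Arguments ba_mul {_}.

(* power a^n for n >= 1 : apow a 1 = a, apow a (n+1) = a * a^n.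
   (apow a 0 is set to a; it is never used with n = 0 below.) *)
Fixpoint apow {A : BanachAlgebra} (a : A) (n : nat) : A :=
  match n with
  | O => a
  | S O => a
  | S k => ba_mul a (apow a k)
  end.

Definition is_nil (A : BanachAlgebra) : Prop :=
  exists n : nat, (1 <= n)%nat /\ forall a : A, apow a n = bs_zero.

Record BanachBimodule (A : BanachAlgebra) := {
  bm_sp :> BanachSpace;
  bm_lact : A -> bm_sp -> bm_sp;
  bm_ract : bm_sp -> A -> bm_sp;
  bm_lDl : forall a b x, bm_lact (bs_add a b) x = bs_add (bm_lact a x) (bm_lact b x);
  bm_lDr : forall a x y, bm_lact a (bs_add x y) = bs_add (bm_lact a x) (bm_lact a y);
  bm_lZl : forall l a x, bm_lact (bs_scal l a) x = bs_scal l (bm_lact a x);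
  bm_lZr : forall l a x, bm_lact a (bs_scal l x) = bs_scal l (bm_lact a x);
  bm_rDl : forall x y a, bm_ract (bs_add x y) a = bs_add (bm_ract x a) (bm_ract y a);
  bm_rDr : forall x a b, bm_ract x (bs_add a b) = bs_add (bm_ract x a) (bm_ract x b);
  bm_rZl : forall l x a, bm_ract (bs_scal l x) a = bs_scal l (bm_ract x a);
  bm_rZr : forall l x a, bm_ract x (bs_scal l a) = bs_scal l (bm_ract x a);
  bm_lA : forall a b x, bm_lact (ba_mul a b) x = bm_lact a (bm_lact b x);
  bm_rA : forall x a b, bm_ract x (ba_mul a b) = bm_ract (bm_ract x a) b;
  bm_lrA : forall a x b, bm_ract (bm_lact a x) b = bm_lact a (bm_ract x b);
  bm_lbound : exists M, forall a x, bs_norm (bm_lact a x) <= M * bs_norm a * bs_norm x;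
  bm_rbound : exists M, forall x a, bs_norm (bm_ract x a) <= M * bs_norm x * bs_norm a
}.

Arguments bm_lact {_ _}. Arguments bm_ract {_ _}.

Definition bounded_linear {E F : BanachSpace} (J : E -> F) : Prop :=
  (forall x y, J (bs_add x y) = bs_add (J x) (J y)) /\
  (forall l x, J (bs_scal l x) = bs_scal l (J x)) /\
  (exists M, forall x, bs_norm (J x) <= M * bs_norm x).

(* J : A -> X is an n-Jordan multiplier:
   J(a^n) = a . J(a^{n-1}) = J(a^{n-1}) . a  for all a in A.
   Used for n >= 2, so a^{n-1} is a genuine positive power. *)
Definition is_JMul (n : nat) {A : BanachAlgebra} {X : BanachBimodule A}
    (J : A -> X) : Prop :=
  bounded_linear J /\
  forall a : A,
    J (apow a n) = bm_lact a (J (apow a (n - 1))) /\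
    bm_lact a (J (apow a (n - 1))) = bm_ract (J (apow a (n - 1))) a.

(* Main.v *)
Require Import Defs.
From Stdlib Require Import Reals.
From Stdlib Require Import Lra Psatz.
Open Scope R_scope.

Lemma C_ext (z w : Defs.C) : Re z = Re w -> Im z = Im w -> z = w.
Proof. destruct z, w; simpl; intros -> ->; reflexivity. Qed.

Definition Copp (z : Defs.C) : Defs.C := mkC (- Re z) (- Im z).

Lemma sq_ge0 (z : Defs.C) : 0 <= Re z * Re z + Im z * Im z.
Proof. nra. Qed.

Lemma Cmod_ge0 z : 0 <= Cmod z.
Proof. apply sqrt_pos. Qed.

Lemma Cmod_sq z : Cmod z * Cmod z = Re z * Re z + Im z * Im z.
Proof. unfold Cmod; apply sqrt_sqrt, sq_ge0. Qed.

Lemma Cmod_eq0 z : Cmod z = 0 -> z = C0.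
Proof. intro H. assert (H2 := Cmod_sq z). rewrite H in H2.
  apply C_ext; simpl; nra. Qed.

Lemma Cmod_C0 : Cmod C0 = 0.
Proof. unfold Cmod; simpl. replace (0*0+0*0) with 0 by ring. apply sqrt_0. Qed.

Lemma Cmod_mul z w : Cmod (Cmul z w) = Cmod z * Cmod w.
Proof. unfold Cmod; rewrite <- sqrt_mult by apply sq_ge0. f_equal. simpl; ring. Qed.

Lemma Cmod_tri z w : Cmod (Cadd z w) <= Cmod z + Cmod w.
Proof.
  assert (Ha := Cmod_sq z). assert (Hb := Cmod_sq w).
  assert (ha := Cmod_ge0 z). assert (hb := Cmod_ge0 w).
  assert (Hs : Re z * Re w + Im z * Im w <= Cmod z * Cmod w).
  { assert (HP : (Cmod z * Cmod w) * (Cmod z * Cmod w) =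
      (Re z * Re z + Im z * Im z) * (Re w * Re w + Im w * Im w)) by (rewrite <- Ha, <- Hb; ring).
    assert (0 <= Cmod z * Cmod w) by nra.
    set (s := Re z * Re w + Im z * Im w). set (p := Cmod z * Cmod w).
    assert (s * s <= p * p) by (unfold s, p; rewrite HP; assert (0 <= (Re z * Im w - Im z * Re w) * (Re z * Im w - Im z * Re w)) by apply Rle_0_sqr; nra).
    destruct (Rle_or_lt s p) as [|Hlt]; [assumption|].
    assert (0 <= p) by (unfold p; nra).
    assert (p * p < s * s) by (apply Rmult_le_0_lt_compat; lra). lra. }
  unfold Cmod at 1. rewrite <- (sqrt_square (Cmod z + Cmod w)) by lra.
  apply sqrt_le_1_alt. simpl. nra.
Qed.

Lemma Re_le z : Rabs (Re z) <= Cmod z.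
Proof. rewrite <- (sqrt_square (Rabs (Re z))) by apply Rabs_pos.
  unfold Cmod; apply sqrt_le_1_alt. rewrite <- Rabs_mult, Rabs_right by nra. nra. Qed.

Lemma Im_le z : Rabs (Im z) <= Cmod z.
Proof. rewrite <- (sqrt_square (Rabs (Im z))) by apply Rabs_pos.
  unfold Cmod; apply sqrt_le_1_alt. rewrite <- Rabs_mult, Rabs_right by nra. nra. Qed.

Lemma Cmod_le_parts z : Cmod z <= Rabs (Re z) + Rabs (Im z).
Proof.
  unfold Cmod. rewrite <- (sqrt_square (Rabs (Re z) + Rabs (Im z))) by (generalize (Rabs_pos (Re z)) (Rabs_pos (Im z)); lra).
  apply sqrt_le_1_alt.
  assert (Rabs (Re z) * Rabs (Re z) = Re z * Re z) by (rewrite <- Rabs_mult; apply Rabs_right; nra).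
  assert (Rabs (Im z) * Rabs (Im z) = Im z * Im z) by (rewrite <- Rabs_mult; apply Rabs_right; nra).
  generalize (Rabs_pos (Re z)) (Rabs_pos (Im z)); nra.
Qed.

Lemma C_complete : forall u : nat -> Defs.C,
    (forall eps, 0 < eps -> exists N, forall m n, (N <= m)%nat -> (N <= n)%nat ->
        Cmod (Cadd (u m) (Copp (u n))) < eps) ->
    exists l, forall eps, 0 < eps -> exists N, forall n, (N <= n)%nat ->
        Cmod (Cadd (u n) (Copp l)) < eps.
Proof.
  intros u Hu.
  assert (Hr : Cauchy_crit (fun n => Re (u n))).
  { intros eps He. destruct (Hu eps He) as [N HN]. exists N. intros n m Hn Hm.
    unfold Rdist. eapply Rle_lt_trans; [|apply (HN n m Hn Hm)].
    eapply Rle_trans; [|apply Re_le]. simpl. right; f_equal; ring. }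
  assert (Hi : Cauchy_crit (fun n => Im (u n))).
  { intros eps He. destruct (Hu eps He) as [N HN]. exists N. intros n m Hn Hm.
    unfold Rdist. eapply Rle_lt_trans; [|apply (HN n m Hn Hm)].
    eapply Rle_trans; [|apply Im_le]. simpl. right; f_equal; ring. }
  destruct (R_complete _ Hr) as [lr Hlr]. destruct (R_complete _ Hi) as [li Hli].
  exists (mkC lr li). intros eps He.
  destruct (Hlr (eps/2)) as [N1 H1]; [lra|]. destruct (Hli (eps/2)) as [N2 H2]; [lra|].
  exists (Nat.max N1 N2). intros n Hn.
  eapply Rle_lt_trans; [apply Cmod_le_parts|]. simpl.
  assert (A1 := H1 n ltac:(lia)). assert (A2 := H2 n ltac:(lia)). unfold Rdist in *.
  replace (Re (u n) + - lr) with (Re (u n) - lr) by ring.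
  replace (Im (u n) + - li) with (Im (u n) - li) by ring. lra.
Qed.

Definition CBS : BanachSpace.
Proof.
  refine {| bs_car := Defs.C; bs_add := Cadd; bs_zero := C0; bs_opp := Copp;
            bs_scal := Cmul; bs_norm := Cmod |}.
  all: try (intros; apply C_ext; simpl; ring).
  - apply Cmod_ge0.
  - apply Cmod_eq0.
  - apply Cmod_mul.
  - apply Cmod_tri.
  - apply C_complete.
Defined.

Section Prod.
Variables E F : BanachSpace.

Definition padd (x y : E * F) : E * F := (bs_add (fst x) (fst y), bs_add (snd x) (snd y)).
Definition pscal l (x : E * F) : E * F := (bs_scal l (fst x), bs_scal l (snd x)).
Definition pnorm (x : E * F) : R := bs_norm (fst x) + bs_norm (snd x).

Lemma pair_ext (x y : E * F) : fst x = fst y -> snd x = snd y -> x = y.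
Proof. destruct x, y; simpl; intros -> ->; reflexivity. Qed.

Lemma prod_complete : forall u : nat -> E * F,
    (forall eps, 0 < eps -> exists N, forall m n, (N <= m)%nat -> (N <= n)%nat ->
        pnorm (padd (u m) (bs_opp (fst (u n)), bs_opp (snd (u n)))) < eps) ->
    exists l, forall eps, 0 < eps -> exists N, forall n, (N <= n)%nat ->
        pnorm (padd (u n) (bs_opp (fst l), bs_opp (snd l))) < eps.
Proof.
  intros u Hu. unfold pnorm, padd in *; simpl in *.
  destruct (bs_complete E (fun n => fst (u n))) as [l1 Hl1].
  { intros eps He. destruct (Hu eps He) as [N HN]. exists N. intros m n Hm Hn.
    specialize (HN m n Hm Hn). generalize (bs_norm_ge0 F (bs_add (snd (u m)) (bs_opp (snd (u n))))). lra. }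
  destruct (bs_complete F (fun n => snd (u n))) as [l2 Hl2].
  { intros eps He. destruct (Hu eps He) as [N HN]. exists N. intros m n Hm Hn.
    specialize (HN m n Hm Hn). generalize (bs_norm_ge0 E (bs_add (fst (u m)) (bs_opp (fst (u n))))). lra. }
  exists (l1, l2). intros eps He.
  destruct (Hl1 (eps/2)) as [N1 H1]; [lra|]. destruct (Hl2 (eps/2)) as [N2 H2]; [lra|].
  exists (Nat.max N1 N2). intros n Hn. simpl.
  assert (A1 := H1 n ltac:(lia)). assert (A2 := H2 n ltac:(lia)). lra.
Qed.

Lemma pnorm_eq0 x : pnorm x = 0 -> x = (bs_zero, bs_zero).
Proof. unfold pnorm; intro H. generalize (bs_norm_ge0 E (fst x)) (bs_norm_ge0 F (snd x)); intros.
  apply pair_ext; simpl; apply bs_norm_eq0; lra. Qed.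

Definition ProdBS : BanachSpace.
Proof.
  refine {| bs_car := E * F; bs_add := padd; bs_zero := (bs_zero, bs_zero);
            bs_opp := fun x => (bs_opp (fst x), bs_opp (snd x));
            bs_scal := pscal; bs_norm := pnorm |}.
  - intros; apply pair_ext; simpl; apply bs_addA.
  - intros; apply pair_ext; simpl; apply bs_addC.
  - intros; apply pair_ext; simpl; apply bs_add0.
  - intros; apply pair_ext; simpl; apply bs_addN.
  - intros; apply pair_ext; simpl; apply bs_scal1.
  - intros; apply pair_ext; simpl; apply bs_scalA.
  - intros; apply pair_ext; simpl; apply bs_scalDr.
  - intros; apply pair_ext; simpl; apply bs_scalDl.
  - intros; unfold pnorm; generalize (bs_norm_ge0 E (fst x)) (bs_norm_ge0 F (snd x)); lra.
  - apply pnorm_eq0.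
  - intros; unfold pnorm, pscal; simpl; rewrite !bs_normZ; ring.
  - intros; unfold pnorm, padd; simpl.
    generalize (bs_normD E (fst x) (fst y)) (bs_normD F (snd x) (snd y)); lra.
  - apply prod_complete.
Defined.
End Prod.

Definition ASp : BanachSpace := ProdBS CBS (ProdBS CBS CBS).

Definition amul (a b : ASp) : ASp :=
  (Cmul (fst a) (fst b), (C0, Cmul (fst (snd a)) (fst (snd b)))).

Ltac csolve := apply C_ext; simpl; ring.
Ltac psolve :=
  cbv [amul padd pscal fst snd]; simpl; unfold padd, pscal; simpl;
  apply injective_projections; simpl; [csolve | apply injective_projections; simpl; csolve].

Definition Alg : BanachAlgebra.
Proof.
  refine {| ba_sp := ASp; ba_mul := amul |}.
  1-3: intros [? [? ?]] [? [? ?]] [? [? ?]]; psolve.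
  1-2: intros ? [? [? ?]] [? [? ?]]; psolve.
  intros [x [p q]] [y [r s]]. cbv [amul]; simpl. unfold pnorm; simpl.
  unfold pnorm; simpl. rewrite Cmod_C0, !Cmod_mul.
  generalize (Cmod_ge0 x) (Cmod_ge0 p) (Cmod_ge0 q) (Cmod_ge0 y) (Cmod_ge0 r) (Cmod_ge0 s).
  intros. nra.
Defined.

Definition Xmod : BanachBimodule Alg.
Proof.
  refine {| bm_sp := CBS; bm_lact := fun _ _ => C0; bm_ract := fun _ _ => C0 |}.
  all: try (intros; apply C_ext; simpl; ring).
  all: try reflexivity.
  all: exists 0; intros; simpl; rewrite Cmod_C0; lra.
Defined.

Ltac pp := apply injective_projections; simpl;
  [apply C_ext; simpl; ring | unfold pscal; simpl; apply injective_projections; simpl; apply C_ext; simpl; ring].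

Definition Jex (a : Alg) : Xmod := snd (snd a).

Definition e1 : Alg := (Defs.C1, (C0, C0)).

Lemma apow_e n : apow e1 (S n) = e1.
Proof.
  induction n; [reflexivity|].
  change (apow e1 (S (S n))) with (ba_mul e1 (apow e1 (S n))). rewrite IHn.
  simpl. unfold amul, e1; simpl. pp.
Qed.

Theorem mainTheorem16 :
  exists (A : BanachAlgebra) (X : BanachBimodule A),
    ~ is_nil A /\
    (forall J : A -> X, is_JMul 2 J -> is_JMul 3 J) /\
    (exists J : A -> X, is_JMul 3 J /\ ~ is_JMul 2 J).
Proof.
  exists Alg, Xmod. split; [|split].
  - intros [n [Hn H]]. specialize (H e1). destruct n; [lia|]. rewrite apow_e in H.
    apply (f_equal (fun a : ASp => Re (fst a))) in H. simpl in H. lra.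
  - intros J [HL H2]. split; [exact HL|]. intros a. split; [|reflexivity].
    simpl. destruct HL as [Hadd [Hsc _]].
    assert (He : J e1 = C0).
    { destruct (H2 e1) as [H _]. simpl in H. rewrite <- H. f_equal.
      unfold amul, e1; simpl. pp. }
    destruct a as [x [p q]].
    transitivity (J (bs_scal (Cmul x (Cmul x x)) e1)).
    + f_equal. simpl. unfold amul, pscal, e1; simpl. pp.
    + rewrite Hsc, He. apply C_ext; simpl; ring.
  - exists Jex. split.
    + split.
      * split; [reflexivity|]. split; [reflexivity|]. exists 1. intros [x [p q]].
        unfold Jex; simpl. unfold pnorm; simpl.
        generalize (Cmod_ge0 x) (Cmod_ge0 p) (Cmod_ge0 q). unfold pnorm; simpl. lra.
      * intros [x [p q]]. split; [|reflexivity]. simpl. unfold Jex, amul; simpl.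
        apply C_ext; simpl; ring.
    + intros [_ H]. destruct (H (C0, (Defs.C1, C0))) as [H1 _]. simpl in H1.
      unfold Jex, amul in H1; simpl in H1. apply (f_equal Re) in H1; simpl in H1; lra.
Qed.
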